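(* Let $d:\Sigma^n\to\Sigma$ be a depth assignment and let $s_0,\dots,s_m$ be a path in the valid subgraph of $B_n$ (i.e. each $(s_i,s_{i+1})$ is a valid arc). Then \[\sum_{i=0}^{m-1} e_{s_i[0]} \equiv P\left(H(s_0)+e_{d_{s_0}}\right) - P\left(H(s_m)+e_{d_{s_m}}\right) \mod K.\]
   Context: Let $k\ge 1$ be an integer, $\Sigma=\{0,1,\dots,k-1\}$ with arithmetic on symbols taken modulo $k$, and $n\ge 1$. For $s\in\Sigma^n$ write $s=s[0]\cdots s[n-1]$. The de Bruijn graph $B_n$ has node set $\Sigma^n$ and an arc $(s,t)$ iff $s[1]\cdots s[n-1]=t[0]\cdots t[n-2]$. A depth assignment is any function $d:\Sigma^n\to\Sigma$, written $s\mapsto d_s$. An arc $(s,t)$ of $B_n$ is valid (with respect to $d$) if, with $b=s[0]$ and $c=t[n-1]$, either ($b+1=c$ and $d_s=d_t$) or ($b+1=d_t$ and $c=d_s$); the valid arcs form the valid subgraph. The histogram $H(s):\Sigma\to\mathbb{Z}$ counts occurrences of each symbol in $s$; $e_b$ is the indicator function of $b\in\Sigma$; $K$ is the constant function $1$ on $\Sigma$; $P(H)(i)=\sum_{j=0}^i H(j)$ is the partial sum of $H:\Sigma\to\mathbb{Z}$; $F\equiv G\mod K$ means $F-G$ is an integer multiple of $K$. *)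

(* Defs.v *)
From mathcomp Require Import all_boot all_order all_algebra.
Set Implicit Arguments. Unset Strict Implicit. Unset Printing Implicit Defensive.
Import GRing.Theory Num.Theory.
Local Open Scope ring_scope.

(* Alphabet Sigma = 'I_k (symbols 0..k-1), arithmetic mod k.
   Strings s in Sigma^n are n-tuples of 'I_k. *)
Definition word (k n : nat) := (n.-tuple 'I_k)%type.

Definition sym (k n : nat) (s : word k n) (i : nat) : nat := nth 0%N (map val s) i.

Definition dB_arc (k n : nat) (s t : word k n) : Prop :=
  forall i : nat, (i < n.-1)%N -> sym s i.+1 = sym t i.

Definition succ_mod (k b : nat) : nat := (b.+1 %% k)%N.

Definition valid_arc (k n : nat) (d : word k n -> 'I_k) (s t : word k n) : Prop :=
  dB_arc s t /\
  (let b := sym s 0 in let c := sym t n.-1 in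
   (succ_mod k b = c /\ d s = d t) \/
   (succ_mod k b = val (d t) /\ c = val (d s))).

Definition hist (k n : nat) (s : word k n) : 'I_k -> int :=
  fun j => (count (pred1 j) s)%:Z.

Definition ind (k : nat) (b : nat) : 'I_k -> int := fun j => ((val j == b) : nat)%:Z.

Definition psum (k : nat) (H : 'I_k -> int) : 'I_k -> int :=
  fun i => \sum_(j < k | (j <= i)%N) H j.

(* F == G mod K : F - G is an integer multiple of the constant function 1 *)
Definition eqmodK (k : nat) (F G : 'I_k -> int) : Prop :=
  exists c : int, forall i : 'I_k, F i - G i = c.

(* Main.v *)
Require Import Defs.
From mathcomp Require Import all_boot all_order all_algebra zify ring.
Import GRing.Theory Num.Theory.
Local Open Scope ring_scope.
Set Implicit Arguments. Unset Strict Implicit.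

Lemma psum_ind k (b : nat) (i : 'I_k) : (b < k)%N -> psum (@ind k b) i = (b <= i)%N%:Z.
Proof.
move=> hb; rewrite /psum /ind big_mkcond (bigD1 (Ordinal hb)) //= big1 ?addr0.
  by rewrite eqxx; case: ifP.
by move=> j /eqP hj; case: ifP => // _; case: eqP => // hj'; exfalso; apply: hj; apply: val_inj.
Qed.

Lemma psum_ext k (F G : 'I_k -> int) i : (forall l, F l = G l) -> psum F i = psum G i.
Proof. by move=> h; apply: eq_bigr. Qed.

Lemma psumD k (F G : 'I_k -> int) i : psum (fun l => F l + G l) i = psum F i + psum G i.
Proof. by rewrite /psum big_split. Qed.
Lemma psumN k (F : 'I_k -> int) i : psum (fun l => - F l) i = - psum F i.
Proof. by rewrite /psum sumrN. Qed.

Lemma hist_arc k n (s t : word k n) : (0 < n)%N -> dB_arc s t ->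
  forall j, hist t j = hist s j - @ind k (sym s 0) j + @ind k (sym t n.-1) j.
Proof.
move=> hn hd j; rewrite /hist /ind /sym.
have hs : size (map val s) = n by rewrite size_map size_tuple.
have ht : size (map val t) = n by rewrite size_map size_tuple.
have e1 : count (pred1 j) s = count (pred1 (val j)) (map val s).
  by rewrite count_map; apply: eq_count => x /=; rewrite -val_eqE.
have e2 : count (pred1 j) t = count (pred1 (val j)) (map val t).
  by rewrite count_map; apply: eq_count => x /=; rewrite -val_eqE.
rewrite e1 e2.
move: hd; rewrite /dB_arc /sym.
move: (map val s) (map val t) hs ht => u v hu hv hd.
have hn1 : n.-1.+1 = n by rewrite prednK.
have Hu : u = nth 0%N u 0 :: take n.-1 v.
  apply: (@eq_from_nth _ 0%N); first by rewrite /= size_take hv -hn1 ltnSn hn1.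
  move=> i; rewrite hu; case: i => [|i] //= hi.
  by rewrite nth_take -?hd //; rewrite -hn1 ltnS in hi.
have Hv : v = take n.-1 v ++ [:: nth 0%N v n.-1].
  rewrite -{1}(cat_take_drop n.-1 v); congr (_ ++ _).
  rewrite (drop_nth 0%N); last by rewrite hv -{2}hn1.
  by rewrite hn1 drop_oversize // hv.
rewrite {1}Hu {1}Hv count_cat /= addn0.
rewrite (eq_sym (nth 0%N v n.-1)) (eq_sym (nth 0%N u 0)).
case: (val j == nth 0%N v n.-1); case: (val j == nth 0%N u 0) => /=; lia.
Qed.

Lemma sym_lt k n (s : word k n) i : (0 < k)%N -> (sym s i < k)%N.
Proof.
move=> hk; rewrite /sym; case: (ltnP i (size (map val s))) => h.
  by rewrite (nth_map (Ordinal hk)) ?ltn_ord // -(size_map val).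
by rewrite nth_default.
Qed.

Definition G k n (d : word k n -> 'I_k) (s : word k n) (l : 'I_k) : int :=
  hist s l + @ind k (val (d s)) l.

Lemma G_arc k n (d : word k n -> 'I_k) s t : (0 < n)%N -> valid_arc d s t ->
  forall l, G d t l = G d s l - @ind k (sym s 0) l + @ind k (succ_mod k (sym s 0)) l.
Proof.
move=> hn [ha hc] l; rewrite /G (hist_arc hn ha).
case: hc => [[<- ->]|[-> ->]]; rewrite /ind; lia.
Qed.

Lemma step k n (hk : (0 < k)%N) (hn : (0 < n)%N) (d : word k n -> 'I_k) s t :
  valid_arc d s t -> exists c : int, forall j,
   @ind k (sym s 0) j - (psum (G d s) j - psum (G d t) j) = c.
Proof.
move=> hv; set b := sym s 0.
have hb : (b < k)%N by apply: sym_lt.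
have E : forall j, psum (G d t) j = psum (G d s) j - psum (@ind k b) j + psum (@ind k (succ_mod k b)) j.
  move=> j; rewrite (psum_ext _ (G_arc hn hv)) !psumD psumN //.
have hj := fun j : 'I_k => ltn_ord j.
case: (ltngtP b.+1 k) => hbk.
- exists 0 => j; rewrite E /succ_mod modn_small // !psum_ind // /ind.
  move: (ltn_ord j : (val j < k)%N); case: (ltngtP (val j) b) => h /=; lia.
- by rewrite ltnNge hb in hbk.
- exists 1 => j; rewrite E /succ_mod hbk modnn !psum_ind // /ind.
  case: (ltngtP (val j) b) => h /=; try lia.
  have H1 : (nat_of_ord j < b.+1)%N by rewrite hbk.
  by move: H1; rewrite ltnS => /(leq_trans h); rewrite ltnn.
Qed.

Unset Implicit Arguments.
Theorem lemma4 (k n : nat) (hk : (0 < k)%N) (hn : (0 < n)%N)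
  (d : word k n -> 'I_k) (m : nat) (s : nat -> word k n)
  (hpath : forall i : nat, (i < m)%N -> valid_arc d (s i) (s i.+1)) :
  eqmodK (fun j : 'I_k => \sum_(i < m) @ind k (sym (s i) 0) j)
         (fun j : 'I_k =>
            psum (fun l => hist (s 0%N) l + @ind k (val (d (s 0%N))) l) j
          - psum (fun l => hist (s m) l + @ind k (val (d (s m))) l) j).
Proof.
rewrite /eqmodK; elim: m hpath => [|m IH] hp.
  by exists 0 => j; rewrite big_ord0 subrr subr0.
have [c1 h1] := IH (fun i hi => hp i (ltnW hi)).
have [c2 h2] := step hk hn (hp m (ltnSn m)).
exists (c1 + c2) => j; rewrite big_ord_recr /= -(h1 j) -(h2 j).
rewrite /G; set A := psum _ j; set B := psum _ j; set C := psum _ j.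
rewrite /C. ring.
Qed.
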